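(* Let $(H,f)$ be a vertex-weighted graph where $H$ is connected with at least one edge and $f$ is not identically zero, and let $G=L(H,f)$. Then $k(G)=1$ if one of the following holds: (i) $f(u)=f(v)=1$ for some edge $uv$ of $H$; (ii) $f(v)\le 1$ for every vertex $v$ of $H$.
   Context: All graphs are finite and simple. For a digraph $D$, its competition graph $C(D)$ has vertex set $V(D)$, two distinct vertices $u,v$ adjacent iff some vertex $x$ satisfies $(u,x),(v,x)\in A(D)$. The competition number $k(G)$ is the smallest nonnegative integer $k$ such that $G$ together with $k$ new isolated vertices is the competition graph of an acyclic digraph. For a positive integer $m$, $CP(m)$ is the complete multipartite graph with $m$ parts each of size two ($CP(1)$ is two nonadjacent vertices). A vertex-weighted graph $(H,f)$ is a graph $H$ with $f:V(H)\to\mathbb{Z}_{\ge0}$. The generalized line graph $L(H,f)$ is obtained from the disjoint union of the line graph $L(H)$ (vertex set $E(H)$, two distinct edges adjacent iff they share an endpoint) and the graphs $Q_v:=CP(f(v))$ for each $v$ with $f(v)>0$, by adding all edges between every vertex of $Q_v$ and every $e\in E(H)$ incident to $v$. *)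

(* Defs.v *)
From mathcomp Require Import all_boot.
Set Implicit Arguments. Unset Strict Implicit. Unset Printing Implicit Defensive.

Definition simple_graph (T : finType) (g : rel T) : Prop :=
  symmetric g /\ irreflexive g.

(* A digraph D on a finType is a relation (arc set); it is acyclic iff it has
   no directed cycle (loops included). *)
Definition acyclic (T : finType) (a : rel T) : Prop :=
  ~ (exists x y, a x y /\ connect a y x).

Definition add_isolated (T : finType) (g : rel T) (k : nat) : rel (T + 'I_k) :=
  fun x y => match x, y with inl u, inl v => g u v | _, _ => false end.

Definition is_competition_graph_of (T : finType) (g : rel T) (a : rel T) : Prop :=
  forall u v, u != v -> g u v = [exists x, a u x && a v x].

Definition comp_ok (T : finType) (g : rel T) (k : nat) : Prop :=
  exists a : rel (T + 'I_k), acyclic a /\ is_competition_graph_of (@add_isolated T g k) a.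

Definition competition_number_is (T : finType) (g : rel T) (k : nat) : Prop :=
  comp_ok g k /\ forall j, j < k -> ~ comp_ok g j.

Definition hedge (V : finType) (h : rel V) : predArgType :=
  {e : {set V} | [exists u, exists v, h u v && (e == [set u; v])]}.

(* Vertices of Q_v = CP(f v): pairs (i, b), i < f v the part, b in the part. *)
Definition cpvert (V : finType) (f : V -> nat) : predArgType :=
  {v : V & ('I_(f v) * bool)%type}.

Definition glg_vert (V : finType) (h : rel V) (f : V -> nat) : predArgType :=
  (hedge h + cpvert f)%type.

Definition glg_adj (V : finType) (h : rel V) (f : V -> nat) : rel (glg_vert h f) :=
  fun x y =>
    match x, y with
    | inl e, inl e' => (e != e') && (val e :&: val e' != set0)
    | inl e, inr q => tag q \in val e
    | inr q, inl e => tag q \in val e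
    | inr q, inr q' =>
        (tag q == tag q') && (nat_of_ord (tagged q).1 != nat_of_ord (tagged q').1)
    end.

(* Main.v *)
Require Import Defs.
From mathcomp Require Import all_boot.
From mathcomp Require Import zify.
Set Implicit Arguments. Unset Strict Implicit. Unset Printing Implicit Defensive.


Lemma acyclic_rank (T : finType) (a : rel T) (rk : T -> nat) :
  (forall x y, a x y -> rk x < rk y) -> acyclic a.
Proof.
move=> H [x [y [axy /connectP [p pth Ex]]]].
have: rk y <= rk (last y p).
  elim: p y pth {axy Ex} => [|z p IH] y //= /andP [ayz pz].
  exact: leq_trans (ltnW (H _ _ ayz)) (IH _ pz).
rewrite -Ex. have := H _ _ axy. lia.
Qed.

Lemma acyclic_sink (T : finType) (a : rel T) (x0 : T) :
  acyclic a -> exists x, forall y, ~~ a x y.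
Proof.
move=> ac.
pose R x := #|[set y | connect a x y]|.
case: (arg_minnP R (erefl (predT x0))) => x _ Hmin.
exists x => y; apply/negP => axy.
have: R y < R x.
  apply: proper_card; apply/properP; split.
    apply/subsetP => z; rewrite !inE => cyz.
    exact: connect_trans (connect1 axy) cyz.
  exists x; rewrite !inE ?connect0 //.
  apply/negP => cyx; apply: ac; by exists x, y.
by rewrite ltnNge Hmin.
Qed.
Lemma not_comp0 (T : finType) (g : rel T) (x0 : T) :
  (forall x, exists y, (y != x) && g x y) -> ~ comp_ok g 0.
Proof.
move=> Hn [a [ac cg]].
have [[s|[i lt]] Hs] := acyclic_sink (inl x0) ac; last by [].
have [y /andP [ys gy]] := Hn s.
have := cg (inl s) (inl y).
rewrite /= gy eq_sym.
have -> : (inl y == inl s :> T + 'I_0) = (y == s) by [].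
rewrite ys => /(_ isT) /esym /existsP [z /andP [asz _]].
by move: (Hs z); rewrite asz.
Qed.

Lemma comp1 (T : finType) (g : rel T) (hs : T + 'I_1 -> {set T}) (rk : T + 'I_1 -> nat) :
  (forall y t, t \in hs y -> rk (inl t) < rk y) ->
  (forall y t1 t2, t1 \in hs y -> t2 \in hs y -> t1 != t2 -> g t1 t2) ->
  (forall t1 t2, t1 != t2 -> g t1 t2 -> exists y, (t1 \in hs y) && (t2 \in hs y)) ->
  comp_ok g 1.
Proof.
move=> Hrk Hcl Hcov.
pose a := fun y1 y2 : T + 'I_1 => if y1 is inl t then t \in hs y2 else false.
exists a; split.
  apply: (@acyclic_rank _ a rk) => [[t|//] y /= ]; exact: Hrk.
move=> [t1|i1] [t2|i2] //= ne; last first.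
all: try by apply/esym/existsP => -[y]; rewrite ?andbF.
- have ne' : t1 != t2 by [].
  apply/idP/existsP.
    by move=> /(Hcov _ _ ne') [y Hy]; exists y.
  by move=> [y /andP [h1 h2]]; exact: Hcl h1 h2 ne'.
all: by apply/esym/existsP => -[y]; rewrite ?andbF.
Qed.


Lemma crossing (V : finType) (h : rel V) (P : pred V) x y :
  connect h x y -> ~~ P x -> P y -> exists c d, [&& ~~ P c, P d & h c d].
Proof.
move=> /connectP [p pth ->] {y}.
elim: p x pth => [|z p IH] x /=; first by move=> _ /negPf ->.
move=> /andP [hxz pz] nPx.
case Pz: (P z).
  by move=> _; exists x, z; rewrite nPx Pz hxz.
by apply: IH pz _; rewrite Pz.
Qed.

Definition goodl (V : finType) (h : rel V) (r : V) (s : seq V) :=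
  forall y, y \in s -> y != r -> exists2 z, z \in s & h y z && (index y s < index z s).

Lemma grow (V : finType) (h : rel V) (u r : V) :
  h u r -> u != r -> (forall x y, connect h x y) ->
  forall n s, size s + n = #|V| -> uniq s -> goodl h r s ->
  (exists s', s = s' ++ [:: u; r]) ->
  exists t, [/\ uniq t, forall x, x \in t, goodl h r t & exists t', t = t' ++ [:: u; r]].
Proof.
move=> hur nur conn; elim=> [|n IH] s Hsz us gs es.
  exists s; split => // x; apply/negPn/negP => xs.
  have := uniq_leq_size (s1 := x :: s) (s2 := enum V).
  rewrite /= xs us => /(_ isT (fun y _ => mem_enum _ y)).
  by rewrite -cardE -Hsz addn0 ltnn.
have [x xs] : exists x, x \notin s.
  case: (pickP (fun x => x \notin s)) => [x xs|H]; first by exists x.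
  have := uniq_leq_size (s1 := enum V) (s2 := s) (enum_uniq _).
  have: {subset enum V <= s} by move=> y _; move: (H y) => /= /negbFE.
  by move=> sub /(_ sub); rewrite -cardE -Hsz; lia.
have rs : r \in s by case: es => s' ->; rewrite mem_cat !inE (eqxx r) !orbT.
have [c [d /and3P [nc dP hcd]]] := crossing (P := mem s) (conn x r) xs rs.
have nc' : c \notin s := nc. have dP' : d \in s := dP.
clear nc dP; rename nc' into nc; rename dP' into dP.
apply: (IH (c :: s)) => //=.
- by rewrite addSn -addnS.
- by rewrite nc us.
- move=> y; rewrite inE => /orP [/eqP ->|ys] yr.
    exists d; first by rewrite inE dP orbT.
    rewrite hcd /= eqxx.
    have -> : (c == d) = false by apply/negbTE; apply/eqP => E; move: nc; rewrite E dP.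
    by [].
  have [z zs /andP [hyz lt]] := gs y ys yr.
  exists z; first by rewrite inE zs orbT.
  rewrite hyz /=.
  have -> : (c == y) = false by apply/negbTE; apply/eqP => E; move: nc; rewrite E ys.
  have -> : (c == z) = false by apply/negbTE; apply/eqP => E; move: nc; rewrite E zs.
  by [].
- by case: es => s' ->; exists (c :: s').
Qed.


Section Construction.
Variables (V : finType) (h : rel V) (f : V -> nat).
Variables (s : seq V) (u r : V).
Hypothesis hsym : symmetric h.
Hypothesis hirr : irreflexive h.
Hypothesis hur : h u r.
Hypothesis s_uniq : uniq s.
Hypothesis s_all : forall x, x \in s.
Hypothesis s_good : goodl h r s.
Hypothesis s_end : exists s', s = s' ++ [:: u; r].
Hypothesis fr : f r = 1.
Hypothesis fu : f u <= 1.
Hypothesis fbig : forall x, 1 < f x -> f u = 1.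

Local Notation GV := (glg_vert h f).
Definition N := size s.
Definition rho x := index x s.
Definition wv k := nth r s k.
Definition par y := odflt r [pick z | h y z && (rho y < rho z)].

Lemma rho_lt x : rho x < N.
Proof. by rewrite /rho /N index_mem. Qed.

Lemma wv_rho x : wv (rho x) = x.
Proof. exact: nth_index. Qed.

Lemma rho_wv k : k < N -> rho (wv k) = k.
Proof. by move=> lt; rewrite /rho /wv index_uniq. Qed.

Lemma rho_inj x y : rho x = rho y -> x = y.
Proof. by move=> E; rewrite -(wv_rho x) E wv_rho. Qed.

Lemma u_neq_r : u != r.
Proof. by apply/eqP => E; move: hur; rewrite E hirr. Qed.

Lemma rho_ur : [/\ rho r = N.-1, rho u = N.-2 & 2 <= N].
Proof.
case: s_end => s' E.
have: uniq s by []. rewrite E cat_uniq /= => /and4P [_ Hd _ _].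
move: Hd; rewrite /= !negb_or => /and3P [ns'u ns'r _].
rewrite /rho /N E !index_cat size_cat /= (negbTE ns'u) (negbTE ns'r) eqxx /=.
rewrite (negbTE u_neq_r) eqxx; split; lia.
Qed.

Lemma par_prop y : y != r -> h y (par y) && (rho y < rho (par y)).
Proof.
move=> yr; rewrite /par; case: pickP => [z //|H].
have [z zs Hz] := s_good (s_all y) yr.
by move: (H z); rewrite Hz.
Qed.

Lemma par_u : par u = r.
Proof.
have [Hr Hu N2] := rho_ur.
have /andP [_ lt] := par_prop u_neq_r.
apply: rho_inj; have := rho_lt (par u); lia.
Qed.

Lemma neq_par y : y != r -> y != par y.
Proof. by move=> /par_prop /andP [_ lt]; apply/eqP => E; move: lt; rewrite -E ltnn. Qed.


Lemma par_h y : y != r -> h y (par y).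
Proof. by move=> /par_prop /andP []. Qed.
Lemma par_lt y : y != r -> rho y < rho (par y).
Proof. by move=> /par_prop /andP []. Qed.

Lemma mkE_proof a b : h a b -> [exists u0, exists v0, h u0 v0 && ([set a; b] == [set u0; v0])].
Proof. by move=> hab; apply/existsP; exists a; apply/existsP; exists b; rewrite hab eqxx. Qed.
Definition mkE a b (hab : h a b) : hedge h := Sub [set a; b] (mkE_proof hab).
Lemma mkE_val a b (hab : h a b) : val (mkE hab) = [set a; b].
Proof. by []. Qed.

Lemma hedgeP (e : hedge h) : exists a b, h a b /\ val e = [set a; b].
Proof. by case: e => e /= /existsP [a /existsP [b /andP [hab /eqP ->]]]; exists a, b. Qed.

Lemma edge_two (e : hedge h) x y z :
  x \in val e -> y \in val e -> z \in val e -> x != y -> z != y -> x = z.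
Proof.
have [a [b [_ ->]]] := hedgeP e; rewrite !inE.
by case/orP=> /eqP-> ; case/orP=> /eqP-> ; case/orP=> /eqP->; rewrite ?eqxx.
Qed.

Definition estar := mkE hur.
Definition Tedge y (hy : y != r) : hedge h := mkE (par_h hy).

Definition tr (e : hedge h) := \max_(y in val e | (y != r) && (par y \in val e)) (rho y).+1.

Lemma tr_le_N (e : hedge h) : tr e <= N.
Proof. by apply/bigmax_leqP => y _; apply: rho_lt. Qed.

Lemma tr_ge (e : hedge h) y : y \in val e -> y != r -> par y \in val e -> (rho y).+1 <= tr e.
Proof. by move=> ye yr pe; apply: (leq_bigmax_cond y) => /=; rewrite ye yr pe. Qed.

Lemma tr_le x (e : hedge h) : x \in val e -> tr e <= (rho x).+1.
Proof.
move=> xe; apply/bigmax_leqP => y /andP [ye /andP [yr pe]].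
case: (eqVneq y x) => [->//|yx].
have xy : x != y by rewrite eq_sym.
have py : par y != y by rewrite eq_sym neq_par.
have E := edge_two xe ye pe xy py.
have := par_lt yr; rewrite -E; lia.
Qed.

Lemma T_uniq a b : a != r -> b != r -> [set a; par a] = [set b; par b] -> a = b.
Proof.
move=> ar br E.
have : a \in [set b; par b] by rewrite -E !inE eqxx.
rewrite !inE => /orP [/eqP //|/eqP apb].
have : b \in [set a; par a] by rewrite E !inE eqxx.
rewrite !inE => /orP [/eqP ba|/eqP bpa].
  by move: (neq_par br); rewrite -apb ba eqxx.
have := par_lt ar; have := par_lt br; rewrite -apb -bpa; lia.
Qed.


Definition cl (x : V) (D w : nat -> bool) : {set GV} :=
  [set y : GV | match y with
     | inl e => x \in val e
     | inr q => [&& tag q == x, D (tagged q).1 & (tagged q).2 == w (tagged q).1] end].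

Lemma cl_clique x D w (t1 t2 : GV) :
  t1 \in cl x D w -> t2 \in cl x D w -> t1 != t2 -> glg_adj t1 t2.
Proof.
rewrite !inE; case: t1 => [e1|[x1 [i1 b1]]]; case: t2 => [e2|[x2 [i2 b2]]] /=.
- move=> h1 h2 ne; rewrite /glg_adj; apply/andP; split; first by [].
  by apply/set0Pn; exists x; rewrite inE h1 h2.
- by move=> h1 /and3P [/eqP E _ _] _; rewrite /glg_adj /= E.
- by move=> /and3P [/eqP E _ _] h2 _; rewrite /glg_adj /= E.
- move=> /and3P [/eqP E1 D1 /eqP B1] /and3P [/eqP E2 D2 /eqP B2] ne.
  subst x1 x2; rewrite /glg_adj /= eqxx /=.
  apply/negP => /eqP Ei; move: ne; rewrite /=.
  have Ei' : i1 = i2 by apply: val_inj.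
  subst i2; rewrite B1 B2 eqxx //.
Qed.

Definition L := [seq x <- enum V | (f x == 1) && (x != u) && (x != r)] ++ [seq x <- enum V | 1 < f x].
Definition ix x := index x L.
Definition M := \max_x f x.
Definition S := (2 * M).+3.
Definition BIG := N + 1 + S * size L.
Definition pos (m i : nat) (b : bool) :=
  if i + 3 <= m then 2 * i + b else if i + 2 == m then (2 * m - 4) + 2 * b else (2 * m - 3) + 2 * b.

Definition sp := option (V * (nat -> bool) * (nat -> bool)).

Definition ext (k : nat) (o : option V) : sp :=
  match o with
  | None => if (k == 0) && (3 <= N) then Some (wv (N - 3), xpred0, xpred0) else None
  | Some x => if k == 0 then Some (x, xpredT, fun _ => true)
              else if (k == 1) && (1 < f x) then Some (x, xpredT, fun i => i + 1 == f x) else None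
  end.

Definition prevL j : option V := if j is j'.+1 then Some (nth r L j') else None.

Definition Pc x j (c : bool) : sp := Some (x, fun k => k <= j, fun k => if k < j then c else ~~ c).

Definition specQ (x : V) (i : nat) (b : bool) : sp :=
  let m := f x in
  if (i == 0) && ~~ b then ext 0 (prevL (ix x))
  else if (1 < m) && (i == 1) && ~~ b then ext 1 (prevL (ix x))
  else if (m == 1) && b then Some (x, xpredT, fun _ => false)
  else if (i + 2 == m) && b then Some (x, xpredT, fun k => k + 3 <= m)
  else if (i + 1 == m) && b then Some (x, xpredT, fun k => k + 2 == m)
  else if (2 <= i) && (i + 3 <= m) then Pc x (i - 1) b
  else if (4 <= m) && (i + 2 == m) then Pc x (m - 3) false
  else if (4 <= m) && (i + 1 == m) then Pc x (m - 3) true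
  else None.

Definition spec (y : GV + 'I_1) : sp :=
  match y with
  | inr _ => Some (r, xpredT, fun _ => true)
  | inl (inl e) =>
      if e == estar then ext 0 (prevL (size L)) else
      match [pick x | (val e == [set x; par x]) && (0 < rho x) && (rho x + 3 <= N)] with
      | Some x => Some (wv (rho x).-1, xpred0, xpred0)
      | None => None end
  | inl (inr q) =>
      let x := tag q in let i := nat_of_ord (tagged q).1 in let b := (tagged q).2 in
      if x == u then (if b then Some (u, xpredT, fun _ => false) else ext 1 (prevL (size L)))
      else if x == r then (if b then Some (r, xpredT, fun _ => false) else Some (u, xpredT, fun _ => true))
      else specQ x i b
  end.

Definition rk (y : GV + 'I_1) : nat :=
  match y with
  | inr _ => BIG + 5
  | inl (inl e) => if e == estar then BIG else tr e
  | inl (inr q) =>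
      let x := tag q in let i := nat_of_ord (tagged q).1 in let b := (tagged q).2 in
      if x == u then BIG + 1 + b else if x == r then BIG + 3 + b
      else N + 1 + S * ix x + pos (f x) i b
  end.

Definition hs (y : GV + 'I_1) : {set GV} :=
  if spec y is Some (x, D, w) then cl x D w else set0.


Lemma memL x : (x \in L) = ((f x == 1) && (x != u) && (x != r)) || (1 < f x).
Proof.
have H : x \in Finite.enum V by rewrite -enumT mem_enum.
by rewrite mem_cat !mem_filter H !andbT.
Qed.

Lemma L_uniq : uniq L.
Proof.
rewrite cat_uniq (filter_uniq _ (enum_uniq _)) (filter_uniq _ (enum_uniq _)) andbT /=.
apply/hasPn => x; rewrite !mem_filter => /andP [fx _]; apply/negP => /andP [/andP [/andP [/eqP f1 _] _] _].
by move: fx; rewrite f1.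
Qed.

Lemma inL_ne x : x \in L -> (x != u) && (x != r).
Proof.
rewrite memL => /orP [/andP [/andP [_ ->] ->] //|fx].
apply/andP; split; apply/eqP => E; move: fx; rewrite E ?fr //.
by move: fu; case: (f u) => [|[|]].
Qed.

Lemma inL_pos x : x \in L -> 0 < f x.
Proof. by rewrite memL => /orP [/andP [/andP [/eqP -> _] _] //|]; case: (f x). Qed.

Lemma inL_of x : 0 < f x -> x != u -> x != r -> x \in L.
Proof. by rewrite memL => fx -> ->; case: (f x) fx => [|[|]]. Qed.

Lemma ix_lt x : x \in L -> ix x < size L.
Proof. by rewrite /ix index_mem. Qed.

Lemma nth_ix x : x \in L -> nth r L (ix x) = x.
Proof. exact: nth_index. Qed.

Lemma ix_nth j : j < size L -> ix (nth r L j) = j.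
Proof. by move=> lt; rewrite /ix index_uniq // L_uniq. Qed.

Lemma L_big j j' : j < j' -> j' < size L -> 1 < f (nth r L j) -> 1 < f (nth r L j').
Proof.
rewrite /L size_cat !nth_cat => jj' lt.
set L1 := [seq x <- enum V | _].
case: ifP => jl.
  move=> fx; have := mem_nth r jl; rewrite mem_filter => /andP [/andP [/andP [/eqP f1 _] _] _].
  by move: fx; rewrite f1.
move/negbT: jl => jl.
move=> _; case: ifP => jl'; first by lia.
move/negbT: jl' => jl'.
have: j' - size L1 < size [seq x <- enum V | 1 < f x] by move: jl'; rewrite /L1; lia.
by move=> /(mem_nth r); rewrite mem_filter => /andP [].
Qed.

Lemma f_le_M x : f x <= M.
Proof. exact: (leq_bigmax x). Qed.

Lemma pos_le m i b : pos m i b <= (2 * m).+2.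
Proof. rewrite /pos; case: ifP => [/idP H|_]; [|case: ifP => _]; case: b => /=; lia. Qed.

Lemma pos_lt x i b : pos (f x) i b < S.
Proof. have := pos_le (f x) i b; have := f_le_M x; rewrite /S; lia. Qed.


Lemma rank_by x (D w : nat -> bool) R :
  (forall e : hedge h, x \in val e -> rk (inl (inl e)) < R) ->
  (forall q : cpvert f, tag q = x -> (tagged q).1 < f x -> D (tagged q).1 ->
       (tagged q).2 = w (tagged q).1 -> rk (inl (inr q)) < R) ->
  forall t, t \in cl x D w -> rk (inl t) < R.
Proof.
move=> He Hq [e|q]; rewrite inE; first exact: He.
move=> /and3P [/eqP E Dq /eqP Wq]; apply: Hq => //.
by case: q E Dq Wq => xq [iq bq] /= E; subst x.
Qed.

Lemma N_le_BIG : N <= BIG.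
Proof. rewrite /BIG; lia. Qed.

Lemma edge_rk_BIG (e : hedge h) : rk (inl (inl e)) <= BIG.
Proof. rewrite /rk; case: ifP => // _; have := tr_le_N e; have := N_le_BIG; lia. Qed.

Lemma estar_val : val estar = [set u; r].
Proof. by []. Qed.

Lemma edge_rk_N x (e : hedge h) : x \in val e -> x != u -> x != r -> rk (inl (inl e)) <= N.
Proof.
move=> xe xu xr; rewrite /rk; case: eqP => [E|_]; last exact: tr_le_N.
by move: xe; rewrite E estar_val !inE (negbTE xu) (negbTE xr).
Qed.

Lemma rkQ (q : cpvert f) : rk (inl (inr q)) =
  if tag q == u then BIG + 1 + (tagged q).2 else if tag q == r then BIG + 3 + (tagged q).2
  else N + 1 + S * ix (tag q) + pos (f (tag q)) (tagged q).1 (tagged q).2.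
Proof. by []. Qed.

Lemma rkQ_x (q : cpvert f) x : tag q = x -> x != u -> x != r ->
  rk (inl (inr q)) = N + 1 + S * ix x + pos (f x) (tagged q).1 (tagged q).2.
Proof. by case: q => xq [iq bq] /= E; subst x => xu xr; rewrite /rk /= (negbTE xu) (negbTE xr). Qed.

Lemma rkQ_u (q : cpvert f) : tag q = u -> rk (inl (inr q)) = BIG + 1 + (tagged q).2.
Proof. by case: q => xq [iq bq] /= E; subst xq; rewrite /rk /= eqxx. Qed.

Lemma r_neq_u : r != u.
Proof. by rewrite eq_sym u_neq_r. Qed.

Lemma rkQ_r (q : cpvert f) : tag q = r -> rk (inl (inr q)) = BIG + 3 + (tagged q).2.
Proof. by case: q => xq [iq bq] /= E; subst xq; rewrite /rk /= eqxx (negbTE r_neq_u). Qed.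

Lemma ext_rank j k x (D w : nat -> bool) : j <= size L -> ext k (prevL j) = Some (x, D, w) ->
  forall t, t \in cl x D w -> rk (inl t) < N + 1 + S * j.
Proof.
case: j => [|j] jl /=.
  case: ifP => // /andP [_ N3] [<- <- _]; apply: rank_by => [e xe|q _ //].
  have [Hr Hu N2] := rho_ur.
  have hu : wv (N - 3) != u by apply/eqP => E; move: Hu; rewrite -E rho_wv; lia.
  have hr : wv (N - 3) != r by apply/eqP => E; move: Hr; rewrite -E rho_wv; lia.
  have := edge_rk_N xe hu hr; lia.
set x' := nth r L j.
have xL : x' \in L by apply: mem_nth.
have /andP [xu xr] := inL_ne xL.
have Hx : forall D' w', Some (x', D', w') = Some (x, D, w) -> forall t, t \in cl x D w -> rk (inl t) < N + 1 + S * j.+1.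
  move=> D' w' [<- _ _]; apply: rank_by => [e xe|q tq _ _ _].
    have := edge_rk_N xe xu xr; lia.
  rewrite (rkQ_x tq xu xr) /x' ix_nth //.
  have := pos_lt (nth r L j) (tagged q).1 (tagged q).2; rewrite mulnS; lia.
case: ifP => [_|_]; first exact: Hx.
by case: ifP => // _; apply: Hx.
Qed.


Lemma ix_le x : ix x <= size L.
Proof. exact: index_size. Qed.

Lemma rank_ok y x (D w : nat -> bool) : spec y = Some (x, D, w) ->
  forall t, t \in cl x D w -> rk (inl t) < rk y.
Proof.
have [Hr Hu N2] := rho_ur.
case: y => [[e|[xq [iq bq]]]|z]; simpl spec.
- case: ifP => [/eqP Ee|ne].
    move=> Hs t ht; have := ext_rank (leqnn _) Hs ht.
    have -> : rk (inl (inl e)) = BIG by rewrite /rk /= Ee eqxx.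
    rewrite /BIG; lia.
  case: pickP => [x' /andP [/andP [/eqP Ev p0] p3]|] // [<- <- _].
  have {}Ev : val e = [set x'; par x'] := Ev.
  set z := wv (rho x').-1.
  have rz : rho z = (rho x').-1 by rewrite /z rho_wv //; have := rho_lt x'; lia.
  have zu : z != u by apply/eqP => E; move: rz; rewrite E Hu; lia.
  have zr : z != r by apply/eqP => E; move: rz; rewrite E Hr; lia.
  have x'r : x' != r by apply/eqP => E; move: p3; rewrite E Hr; lia.
  have tre : (rho x').+1 <= tr e by apply: tr_ge => //; rewrite Ev !inE eqxx ?orbT.
  have -> : rk (inl (inl e)) = tr e by rewrite /rk ne.
  apply: rank_by => [e' ze'|q _ //].
  have := edge_rk_N ze' zu zr.
  have -> : rk (inl (inl e')) = tr e'.
    rewrite /rk; case: eqP => // E; move: ze'; rewrite E estar_val !inE.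
    by rewrite (negbTE zu) (negbTE zr).
  have := tr_le ze'; lia.
- case: (eqVneq xq u) => [E|xu].
    subst xq; case: bq => [[<- <- <-]|Hs].
      have -> : rk (inl (inr (existT _ u (iq, true)))) = BIG + 2 by rewrite /rk /= eqxx; lia.
      apply: rank_by => [e _|q tq _ _ Wq]; first by have := edge_rk_BIG e; lia.
      by rewrite (rkQ_u tq) Wq /=; lia.
    have -> : rk (inl (inr (existT _ u (iq, false)))) = BIG + 1 by rewrite /rk /= eqxx; lia.
    move=> t ht; have := ext_rank (leqnn _) Hs ht; rewrite /BIG; lia.
  case: (eqVneq xq r) => [E|xr].
    subst xq; case: bq => [] [<- <- <-].
      have -> : rk (inl (inr (existT _ r (iq, true)))) = BIG + 4
        by rewrite /rk /= eqxx (negbTE r_neq_u); lia.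
      apply: rank_by => [e _|q tq _ _ Wq]; first by have := edge_rk_BIG e; lia.
      by rewrite (rkQ_r tq) Wq /=; lia.
    have -> : rk (inl (inr (existT _ r (iq, false)))) = BIG + 3
      by rewrite /rk /= eqxx (negbTE r_neq_u); lia.
    apply: rank_by => [e _|q tq _ _ Wq]; first by have := edge_rk_BIG e; lia.
    by rewrite (rkQ_u tq) Wq /=; lia.
  have Hhost : rk (inl (inr (existT _ xq (iq, bq)))) = N + 1 + S * ix xq + pos (f xq) iq bq.
    by rewrite /rk /= (negbTE xu) (negbTE xr).
  rewrite Hhost; clear Hhost.
  have ilt := ltn_ord iq; move: (nat_of_ord iq) ilt => i ilt.
  have Hext : forall k, ext k (prevL (ix xq)) = Some (x, D, w) ->
     forall t, t \in cl x D w -> rk (inl t) < N + 1 + S * ix xq + pos (f xq) i bq.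
    by move=> k Hs t ht; have := ext_rank (ix_le xq) Hs ht; lia.
  have Hin : forall D' w' : nat -> bool,
     (forall i', i' < f xq -> D' i' -> pos (f xq) i' (w' i') < pos (f xq) i bq) ->
     Some (xq, D', w') = Some (x, D, w) ->
     forall t, t \in cl x D w -> rk (inl t) < N + 1 + S * ix xq + pos (f xq) i bq.
    move=> D' w' Hp [<- <- <-]; apply: rank_by => [e xe|q tq lq Dq Wq].
      by have := edge_rk_N xe xu xr; lia.
    rewrite (rkQ_x tq xu xr) Wq.
    have := Hp _ lq Dq; lia.
  rewrite /specQ; case: ifPn => [_|c1]; first exact: Hext.
  case: ifPn => [_|c2]; first exact: Hext.
  case: ifPn => [c3|c3]; first (apply: Hin => i' i'lt _; move: c1 c2 c3; rewrite /pos; clear Hext;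
    case: bq; repeat (case: ifPn => /=); lia).
  case: ifPn => [c4|c4]; first (apply: Hin => i' i'lt _; move: c1 c2 c3 c4; rewrite /pos; clear Hext;
    case: bq; repeat (case: ifPn => /=); lia).
  case: ifPn => [c5|c5]; first (apply: Hin => i' i'lt _; move: c1 c2 c3 c4 c5; rewrite /pos; clear Hext;
    case: bq; repeat (case: ifPn => /=); lia).
  case: ifPn => [c6|c6]; first (apply: Hin => i' i'lt /= Di; move: c1 c2 c3 c4 c5 c6 Di; rewrite /pos; clear Hext;
    case: bq; repeat (case: ifPn => /=); lia).
  case: ifPn => [c7|c7]; first (apply: Hin => i' i'lt /= Di; move: c1 c2 c3 c4 c5 c6 c7 Di; rewrite /pos; clear Hext;
    case: bq; repeat (case: ifPn => /=); lia).
  case: ifPn => [c8|c8] //; first (apply: Hin => i' i'lt /= Di; move: c1 c2 c3 c4 c5 c6 c7 c8 Di; rewrite /pos; clear Hext;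
    case: bq; repeat (case: ifPn => /=); lia).
- have -> : rk (inr z) = BIG + 5 by [].
  move=> [<- <- <-]; apply: rank_by => [e _|q tq _ _ Wq]; first by have := edge_rk_BIG e; lia.
  by rewrite (rkQ_r tq) Wq /=; lia.
Qed.



Definition mkQ x k (lt : k < f x) (b : bool) : GV + 'I_1 := inl (inr (existT _ x (Ordinal lt, b))).

Lemma spec_mkQ x k (lt : k < f x) b : x != u -> x != r -> spec (mkQ lt b) = specQ x k b.
Proof. by move=> xu xr; rewrite /spec /mkQ /= (negbTE xu) (negbTE xr). Qed.

Lemma hostExt j k c : j <= size L -> ext k (prevL j) = Some c -> exists y, spec y = Some c.
Proof.
move=> jl Hs.
have Hk1 : k != 0 -> exists2 x', prevL j = Some x' & 1 < f x' /\ k = 1.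
  move=> k0; move: Hs; case: (prevL j) => [x'|] /=; last by rewrite (negbTE k0).
  rewrite (negbTE k0); case: ifP => // /andP [/eqP -> fx] _; by exists x'.
case: (ltnP j (size L)) => [jlt|jge].
  have xL : nth r L j \in L by apply: mem_nth.
  have /andP [xu xr] := inL_ne xL.
  have fx := inL_pos xL.
  case: (eqVneq k 0) => [k0|k0].
    subst k; exists (mkQ fx false); rewrite spec_mkQ // /specQ /= ix_nth //.
  have [x' Ep [fx' k1]] := Hk1 k0; subst k.
  have fx2 : 1 < f (nth r L j).
    move: Ep; case: j jl jlt {xL xu xr fx Hk1 Hs} => [//|j'] /= jl jlt [Ex'].
    by rewrite -Ex' in fx'; exact: (L_big (ltnSn j') jlt fx').
  exists (mkQ fx2 false); rewrite spec_mkQ // /specQ /= fx2 ix_nth //.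
have Ej : j = size L by apply/eqP; rewrite eqn_leq jl jge.
subst j.
case: (eqVneq k 0) => [k0|k0].
  subst k; exists (inl (inl estar)); by rewrite /= eqxx.
have [x' Ep [fx' k1]] := Hk1 k0; subst k.
have fu1 : 0 < f u by rewrite (fbig fx').
exists (mkQ fu1 false); by rewrite /spec /mkQ /= eqxx.
Qed.


Lemma cover1 x : exists y D w, spec y = Some (x, D, w).
Proof.
have [Hr Hu N2] := rho_ur.
case: (eqVneq x r) => [->|xr]; first by exists (inr ord0), xpredT, xpredT.
case: (eqVneq x u) => [->|xu].
  have fr0 : 0 < f r by rewrite fr.
  by exists (mkQ fr0 false), xpredT, xpredT; rewrite /spec /mkQ /= (negbTE r_neq_u) eqxx.
have rx : rho x + 3 <= N.
  have := rho_lt x.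
  have : rho x != rho r by apply/eqP => /rho_inj E; rewrite E eqxx in xr.
  have : rho x != rho u by apply/eqP => /rho_inj E; rewrite E eqxx in xu.
  rewrite Hr Hu; lia.
case: (eqVneq (rho x + 3) N) => [E3|n3].
  have N3 : 3 <= N by lia.
  have Ew : wv (N - 3) = x by rewrite -E3 addnK wv_rho.
  have He : ext 0 (prevL 0) = Some (x, xpred0, xpred0) by rewrite /= N3 Ew.
  have [y Hy] := hostExt (leq0n _) He.
  by exists y, xpred0, xpred0.
set z := wv (rho x).+1.
have rz : rho z = (rho x).+1 by rewrite rho_wv; lia.
have zr : z != r by apply/eqP => E; move: rz; rewrite E Hr; lia.
exists (inl (inl (Tedge zr))), xpred0, xpred0.
have ne : Tedge zr != estar.
  apply/eqP => E; have : z \in val (Tedge zr) by rewrite mkE_val !inE eqxx.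
  rewrite E estar_val !inE => /orP [] /eqP E'; move: rz; rewrite E' ?Hu ?Hr; lia.
rewrite /spec (negbTE ne).
case: pickP => [x' /andP [/andP [/eqP Ev p0] p3]|H].
  have x'r : x' != r by apply/eqP => E; move: p3; rewrite E Hr; lia.
  have -> : x' = z by apply: T_uniq => //; rewrite -Ev.
  by rewrite rz /= wv_rho.
by move: (H z); rewrite mkE_val eqxx rz /=; lia.
Qed.


Lemma hostA x : x \in L -> exists y, spec y = Some (x, xpredT, xpredT).
Proof. by move=> xL; apply: (@hostExt (ix x).+1 0); [exact: ix_lt xL | rewrite /= nth_ix]. Qed.

Lemma hostB x : x \in L -> 1 < f x -> exists y, spec y = Some (x, xpredT, fun k => k + 1 == f x).
Proof. by move=> xL fx; apply: (@hostExt (ix x).+1 1); [exact: ix_lt xL | rewrite /= nth_ix // fx]. Qed.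

Ltac solveQ := rewrite /specQ; repeat (case: ifPn => /= ?); try (exfalso; lia); try done.

Lemma hostX x : x \in L -> 1 < f x -> exists y, spec y = Some (x, xpredT, fun k => k + 2 == f x).
Proof.
move=> xL fx; have /andP [xu xr] := inL_ne xL.
have l : f x - 1 < f x by lia.
exists (mkQ l true); rewrite spec_mkQ //; solveQ.
Qed.

Lemma hostY x : x \in L -> 1 < f x -> exists y, spec y = Some (x, xpredT, fun k => k + 3 <= f x).
Proof.
move=> xL fx; have /andP [xu xr] := inL_ne xL.
have l : f x - 2 < f x by lia.
exists (mkQ l true); rewrite spec_mkQ //; solveQ.
Qed.

Lemma hostM1 x : x \in L -> f x = 1 -> exists y, spec y = Some (x, xpredT, xpred0).
Proof.
move=> xL fx; have /andP [xu xr] := inL_ne xL.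
have l : 0 < f x by lia.
exists (mkQ l true); rewrite spec_mkQ //; solveQ.
Qed.

Lemma hostP x j b : x \in L -> 0 < j -> j + 3 <= f x -> exists y, spec y = Pc x j b.
Proof.
move=> xL j0 jl; have /andP [xu xr] := inL_ne xL.
case: (ltnP (j + 3) (f x)) => [jl4|jl3].
  have l : j.+1 < f x by lia.
  exists (mkQ l b); rewrite spec_mkQ //; solveQ; congr Pc; lia.
case: b.
  have l : f x - 1 < f x by lia.
  exists (mkQ l false); rewrite spec_mkQ //; solveQ; congr Pc; lia.
have l : f x - 2 < f x by lia.
exists (mkQ l false); rewrite spec_mkQ //; solveQ; congr Pc; lia.
Qed.


Lemma cover2 x i b : i < f x -> exists y D w, spec y = Some (x, D, w) /\ D i /\ w i = b.
Proof.
move=> il.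
have fr0 : 0 < f r by rewrite fr.
case: (eqVneq x u) => [Ex|xu].
  subst x; case: b.
    by exists (mkQ fr0 false), xpredT, xpredT; rewrite /spec /mkQ /= (negbTE r_neq_u) eqxx.
  by exists (mkQ il true), xpredT, xpred0; rewrite /spec /mkQ /= eqxx.
case: (eqVneq x r) => [Ex|xr].
  subst x; case: b; first by exists (inr ord0), xpredT, xpredT.
  by exists (mkQ il true), xpredT, xpred0; rewrite /spec /mkQ /= (negbTE r_neq_u) eqxx.
have xL : x \in L by apply: inL_of => //; lia.
case: b.
  by have [y Hy] := hostA xL; exists y, xpredT, xpredT.
case: (eqVneq (f x) 1) => [f1|f1].
  by have [y Hy] := hostM1 xL f1; exists y, xpredT, xpred0.
have f2 : 1 < f x by move: f1; lia.
case: (eqVneq (i + 1) (f x)) => [Ei|Ei].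
  have [y Hy] := hostX xL f2; exists y, xpredT, (fun k => k + 2 == f x); split => //; split => //.
  by apply/eqP; lia.
have [y Hy] := hostB xL f2; exists y, xpredT, (fun k => k + 1 == f x); split => //; split => //.
exact: negbTE.
Qed.

Lemma cover3 x i j b c : i < j -> j < f x ->
  exists y D w, spec y = Some (x, D, w) /\ [/\ D i, D j, w i = b & w j = c].
Proof.
move=> ij jl.
have f2 : 1 < f x by lia.
have xu : x != u by apply/eqP => E; move: fu; rewrite -E; lia.
have xr : x != r by apply/eqP => E; move: fr; rewrite -E; lia.
have xL : x \in L by apply: inL_of => //; lia.
have [yA HA] := hostA xL; have [yB HB] := hostB xL f2.
have [yX HX] := hostX xL f2; have [yY HY] := hostY xL f2.
case: b; case: c.
- by exists yA, xpredT, xpredT.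
-
  case: (ltnP (j + 2) (f x)) => [j3|j2].
    have j3' : j + 3 <= f x by lia.
    have [y Hy] := hostP true xL (leq_ltn_trans (leq0n i) ij) j3'.
    by exists y, (fun k => k <= j), (fun k => if k < j then true else ~~ true); split => //=;
       split => //; rewrite ?ij ?ltnn ?(ltnW ij).
  case: (eqVneq (j + 1) (f x)) => [j1|j1].
    case: (eqVneq (i + 2) (f x)) => [i2|i2].
      exists yX, xpredT, (fun k => k + 2 == f x); split => //; split => //=; apply/eqP; lia.
    exists yY, xpredT, (fun k => k + 3 <= f x); split => //; split => //=; lia.
  exists yY, xpredT, (fun k => k + 3 <= f x); split => //; split => //=; lia.
-
  case: (ltnP (j + 2) (f x)) => [j3|j2].
    have j3' : j + 3 <= f x by lia.
    have [y Hy] := hostP false xL (leq_ltn_trans (leq0n i) ij) j3'.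
    by exists y, (fun k => k <= j), (fun k => if k < j then false else ~~ false); split => //=;
       split => //; rewrite ?ij ?ltnn ?(ltnW ij).
  case: (eqVneq (j + 1) (f x)) => [j1|j1].
    exists yB, xpredT, (fun k => k + 1 == f x); split => //; split => //=; apply/eqP; lia.
  exists yX, xpredT, (fun k => k + 2 == f x); split => //; split => //=; apply/eqP; lia.
-
  case: (eqVneq (j + 1) (f x)) => [j1|j1].
    case: (eqVneq (i + 2) (f x)) => [i2|i2].
      exists yY, xpredT, (fun k => k + 3 <= f x); split => //; split => //=; lia.
    exists yX, xpredT, (fun k => k + 2 == f x); split => //; split => //=; apply/eqP; lia.
  exists yB, xpredT, (fun k => k + 1 == f x); split => //; split => //=; apply/eqP; lia.
Qed.


Lemma construction_ok : comp_ok (@glg_adj V h f) 1.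
Proof.
apply: (comp1 (hs := hs) (rk := rk)).
- move=> y t; rewrite /hs; case E: (spec y) => [[[x D] w]|]; last by rewrite inE.
  exact: (@rank_ok y x D w E t).
- move=> y t1 t2; rewrite /hs; case: (spec y) => [[[x D] w]|]; first exact: cl_clique.
  by rewrite inE.
- move=> [e1|q1] [e2|q2] ne; rewrite /glg_adj.
  + move=> /andP [_ /set0Pn [x]]; rewrite inE => /andP [x1 x2].
    have [y [D [w Hy]]] := cover1 x; exists y; by rewrite /hs Hy !inE x1 x2.
  + move=> H; have [y [D [w [Hy [Di Wi]]]]] := cover2 (tagged q2).2 (ltn_ord (tagged q2).1).
    by exists y; rewrite /hs Hy !inE H eqxx Di Wi eqxx.
  + move=> H; have [y [D [w [Hy [Di Wi]]]]] := cover2 (tagged q1).2 (ltn_ord (tagged q1).1).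
    by exists y; rewrite /hs Hy !inE H eqxx Di Wi eqxx.
  + case: q1 q2 ne => [x1 [i1 b1]] [x2 [i2 b2]] ne /= /andP [/eqP E Ei]; subst x2.
    case: (ltngtP i1 i2) => [lt|lt|eq]; last by rewrite eq eqxx in Ei.
      have [y [D [w [Hy [D1 D2 W1 W2]]]]] := cover3 b1 b2 lt (ltn_ord i2).
      by exists y; rewrite /hs Hy !inE /= eqxx D1 D2 W1 W2 !eqxx.
    have [y [D [w [Hy [D1 D2 W1 W2]]]]] := cover3 b2 b1 lt (ltn_ord i1).
    by exists y; rewrite /hs Hy !inE /= eqxx D1 D2 W1 W2 !eqxx.
Qed.

End Construction.


Lemma has_nbr0 (V : finType) (h : rel V) :
  (forall x y, connect h x y) -> (exists a b, h a b) -> forall c, exists d, h c d.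
Proof.
move=> conn [a [b hab]] c.
case: (eqVneq c a) => [->|ca]; first by exists b.
have ac : a != c by rewrite eq_sym.
have ncc : ~~ (c != c) by rewrite eqxx.
have [c' [d /and3P [/negPn /eqP E _ hcd]]] := crossing (P := fun y => y != c) (conn c a) ncc ac.
by exists d; rewrite -E.
Qed.

Lemma has_nbr (V : finType) (h : rel V) (f : V -> nat) :
  (forall x y, connect h x y) -> (exists a b, h a b) -> (exists v, 0 < f v) ->
  forall x : glg_vert h f, exists y, (y != x) && glg_adj x y.
Proof.
move=> conn hab [v fv] [e|q].
  have [a [b [hab' Ee]]] := hedgeP e.
  case: (posnP (f a)) => [fa0|fa].
    case: (posnP (f b)) => [fb0|fb].
      have va : v != a by apply/eqP => E; move: fv; rewrite E fa0.
      have vb : v != b by apply/eqP => E; move: fv; rewrite E fb0.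
      have nv : ~~ (v \in val e) by rewrite Ee !inE negb_or va vb.
      have ae : a \in val e by rewrite Ee !inE eqxx.
      have [c [d /and3P [nc dP hcd]]] := crossing (P := fun y => y \in val e) (conn v a) nv ae.
      exists (inl (mkE hcd)); rewrite /= /glg_adj /=.
      have ne : e != mkE hcd by apply/eqP => E; move: nc; rewrite E mkE_val !inE eqxx.
      rewrite eq_sym ne /=; apply/set0Pn; exists d; rewrite inE; apply/andP; split; [exact: dP | by rewrite !inE eqxx orbT].
    by exists (inr (existT _ b (Ordinal fb, false))); rewrite /= /glg_adj /= Ee !inE eqxx orbT.
  by exists (inr (existT _ a (Ordinal fa, false))); rewrite /= /glg_adj /= Ee !inE eqxx.
have [d hd] := has_nbr0 conn hab (tag q).
by exists (inl (mkE hd)); rewrite /= /glg_adj /= !inE eqxx.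
Qed.

Theorem theorem2p11 (V : finType) (h : rel V) (f : V -> nat) :
  simple_graph h ->
  (forall u v, connect h u v) ->
  (exists u v, h u v) ->
  (exists v, 0 < f v) ->
  ((exists u v, [/\ h u v, f u = 1 & f v = 1]) \/ (forall v, f v <= 1)) ->
  competition_number_is (@glg_adj V h f) 1.
Proof.
move=> [hsym hirr] conn hex fex cond.
split; last first.
  move=> j; rewrite ltnS leqn0 => /eqP ->.
  have [a [b hab]] := hex.
  exact: (not_comp0 (inl (mkE hab)) (has_nbr conn hex fex)).
have [u [r [hur fr [fu fbig]]]] : exists u r, [/\ h u r, f r = 1 &
    f u <= 1 /\ forall x, 1 < f x -> f u = 1].
  case: cond => [[u [r [hur fu fr]]]|Hle].
    by exists u, r; split => //; split => //; rewrite fu.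
  have [r fr] := fex.
  have fr1 : f r = 1 by have := Hle r; lia.
  have [d hd] := has_nbr0 conn hex r.
  exists d, r; split => //; first by rewrite hsym.
  by split => // x; have := Hle x; lia.
have ur : u != r by apply/eqP => E; move: hur; rewrite E hirr.
have c2 : 2 <= #|V|.
  have : #|[set u; r]| = 2 by rewrite cards2 ur.
  move=> <-; exact: max_card.
have g0 : goodl h r [:: u; r].
  move=> y; rewrite !inE => /orP [/eqP ->|/eqP ->]; last by rewrite eqxx.
  move=> _; exists r; rewrite ?inE ?eqxx ?orbT // hur /= eqxx (negbTE ur) //.
have sz : size [:: u; r] + (#|V| - 2) = #|V| by exact: subnKC c2.
have us : uniq [:: u; r] by rewrite /= inE ur.
have es : exists s', [:: u; r] = s' ++ [:: u; r] by exists [::].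
have [t [tu tall tg te]] := grow hur ur conn sz us g0 es.
by apply: (@construction_ok V h f t u r).
Qed.
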